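(* Let $G$ be a connected $K_4$-free graph whose diamonds are mutually edge-disjoint. Then $$|E(G)|-|V(G)|-2t(G)+d(G)+1 \le p(G) \le |E(G)|-|V(G)|-t(G)+1.$$ Moreover, the first inequality is an equality if $G^-$ is connected, and the second inequality is an equality if $G^-$ has exactly $2t(G)-d(G)+1$ connected components.
   Context: All graphs are finite and simple. For an acyclic digraph $D$, the phylogeny graph $P(D)$ is the graph on $V(D)$ in which distinct vertices $u,v$ are adjacent if and only if $(u,v)\in A(D)$, or $(v,u)\in A(D)$, or there is a vertex $w$ with $(u,w),(v,w)\in A(D)$. A phylogeny digraph for a graph $G$ is an acyclic digraph $D$ such that $G$ is an induced subgraph of $P(D)$ and $D$ has no arc from a vertex of $V(D)\setminus V(G)$ to a vertex of $V(G)$. The phylogeny number $p(G)$ is the minimum of $|V(D)\setminus V(G)|$ over all phylogeny digraphs $D$ for $G$. A diamond is a subgraph isomorphic to $K_4$ minus one edge (two triangles sharing an edge). $t(G)$ is the number of triangles of $G$ and $d(G)$ the number of diamonds of $G$. A triangle edge is an edge lying on some triangle; $G^-$ is the graph obtained from $G$ by deleting all triangle edges (keeping all vertices). *)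

(* Defs.v *)
From HB Require Import structures.
From mathcomp Require Import all_boot all_order all_algebra.
From Stdlib Require Import ClassicalEpsilon.
Set Implicit Arguments. Unset Strict Implicit. Unset Printing Implicit Defensive.

(* A simple graph G is given by a finite vertex type T and a symmetric,
   irreflexive adjacency relation e : rel T. *)

Section Graphs.
Variable T : finType.
Variable e : rel T.

Definition is_clique (A : {set T}) : bool :=
  [forall x in A, forall y in A, (x != y) ==> e x y].

Definition edge_set : {set {set T}} :=
  [set A : {set T} | (#|A| == 2) && is_clique A].

Definition triangles : {set {set T}} :=
  [set A : {set T} | (#|A| == 3) && is_clique A].
Definition tcount : nat := #|triangles|.

Definition K4_free : Prop :=
  forall A : {set T}, #|A| = 4 -> ~~ is_clique A.

(* Diamonds: subgraphs isomorphic to K4 minus an edge, represented by their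
   edge set: 5 edges of G spanning exactly 4 vertices (any 5 distinct edges
   on 4 vertices form K4 minus one edge, and its vertex set is determined). *)
Definition diamonds : {set {set {set T}}} :=
  [set F : {set {set T}} |
     [&& F \subset edge_set, #|F| == 5 & #|\bigcup_(f in F) f| == 4]].
Definition dcount : nat := #|diamonds|.

Definition diamonds_edge_disjoint : Prop :=
  forall F1 F2, F1 \in diamonds -> F2 \in diamonds -> F1 != F2 ->
    [disjoint F1 & F2].

(* G^- : delete all triangle edges (edges lying on some triangle). *)
Definition triangle_edge (u v : T) : bool := e u v && [exists w, e u w && e v w].
Definition eminus : rel T := fun u v => e u v && ~~ triangle_edge u v.

Definition ncomp (r : rel T) : nat :=
  #|[set [set y | connect r x y] | x : T]|.

End Graphs.

Definition acyclic (V : finType) (D : rel V) : Prop :=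
  forall x y, D x y -> ~~ connect D y x.

(* Adjacency in the phylogeny graph P(D) (for distinct vertices). *)
Definition phylo_adj (V : finType) (D : rel V) (u v : V) : bool :=
  [|| D u v, D v u | [exists w, D u w && D v w]].

(* D is a phylogeny digraph for G = (T, e) with k extra vertices: its vertex
   set is V(G) plus k new vertices (T + 'I_k), D is acyclic, G is an induced
   subgraph of P(D), and no arc goes from a new vertex to a vertex of G. *)
Definition phylo_digraph (T : finType) (e : rel T) (k : nat)
    (D : rel (T + 'I_k)%type) : Prop :=
  [/\ acyclic D,
      forall u v : T, u != v -> e u v = phylo_adj D (inl u) (inl v) &
      forall (s : 'I_k) (t : T), ~~ D (inr s) (inl t) ].

Definition has_phylo_digraph (T : finType) (e : rel T) (k : nat) : Prop :=
  exists D : rel (T + 'I_k)%type, phylo_digraph e D.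

Definition phylogeny_number (T : finType) (e : rel T) : nat :=
  epsilon (inhabits 0%N)
    (fun p => has_phylo_digraph e p /\
              forall k, has_phylo_digraph e k -> (p <= k)%N).

(* Main.v *)
Require Import Defs.
From HB Require Import structures.
From mathcomp Require Import all_boot all_order all_algebra.
From mathcomp Require Import zify.
From Stdlib Require Import Classical ClassicalEpsilon.
Set Implicit Arguments. Unset Strict Implicit. Unset Printing Implicit Defensive.

Lemma subcardeq (U : finType) (A B : {set U}) : A \subset B -> #|B| <= #|A| -> A = B.
Proof. by move=> sAB cBA; apply/eqP; rewrite eqEcard sAB cBA. Qed.

Lemma card_cond (U : finType) (A : {set U}) (P : pred U) :
  #|[set x in A | P x]| = \sum_(x in A) (P x : nat).
Proof.
rewrite -sum1_card big_mkcond /= [RHS]big_mkcond /=.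
by apply: eq_bigr => x _; rewrite inE; case: (x \in A); case: (P x).
Qed.

Lemma card_le_rel (U X : finType) (A : {set U}) (R : U -> X -> bool) :
  (forall a, a \in A -> exists x, R a x) ->
  (forall a a' x, a \in A -> a' \in A -> R a x -> R a' x -> a = a') ->
  #|A| <= #|[set x | [exists a in A, R a x]]|.
Proof.
move=> ex inj.
case: (set_0Vmem A) => [-> | [a0 a0A]]; first by rewrite cards0.
case: (ex a0 a0A) => x0 _.
pose f a := odflt x0 [pick x | R a x].
have fR a : a \in A -> R a (f a).
  move=> aA; rewrite /f; case: pickP => [x //|H].
  by case: (ex a aA) => x; rewrite H.
have finj : {in A &, injective f}.
  by move=> a a' aA a'A fe; apply: (inj a a' (f a) aA a'A (fR a aA)); rewrite fe; exact: fR.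
rewrite -(card_in_imset finj); apply: subset_leq_card.
apply/subsetP => x /imsetP [a aA ->]; rewrite inE.
by apply/exists_inP; exists a => //; apply: fR.
Qed.

Lemma source_ex (V : finType) (D : rel V) : acyclic D -> forall C : {set V}, C != set0 ->
  exists2 w, w \in C & forall u, u \in C -> ~~ D u w.
Proof.
move=> acyc C /set0Pn [w0 w0C].
pose anc (y : V) := [set z | connect D z y].
case: (arg_minnP (fun w => #|anc w|) w0C) => w wC wmin.
exists w => // u uC; apply/negP => Duw.
have lt : #|anc u| < #|anc w|.
  apply: proper_card; rewrite properE; apply/andP; split.
    apply/subsetP => z; rewrite !inE => zu.
    by apply: connect_trans zu (connect1 Duw).
  apply/subsetPn; exists w; first by rewrite inE connect0.
  by rewrite inE; apply: acyc.
by move: (wmin u uC); rewrite leqNgt lt.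
Qed.

Lemma acyc_pot (V : finType) (D : rel V) (phi : V -> nat) :
  (forall x y, D x y -> phi x < phi y) -> acyclic D.
Proof.
move=> H x y Dxy; apply/negP => /connectP [p pth lst].
have le : forall z q, path D z q -> phi z <= phi (last z q).
  move=> z q; elim: q z => [|a q IH] z //= /andP [Dza pq].
  exact: leq_trans (ltnW (H _ _ Dza)) (IH _ pq).
by move: (le _ _ pth); rewrite -lst leqNgt (H _ _ Dxy).
Qed.

Lemma min_ex (P : nat -> Prop) : (exists n, P n) -> exists n, P n /\ forall m, P m -> n <= m.
Proof.
case=> n0; elim: n0 {-2}n0 (leqnn n0) => [|N IH] n le Pn.
  by exists n; split => // m _; move: le; rewrite leqn0 => /eqP ->.
case: (classic (exists m, m < n /\ P m)) => [[m [mn Pm]] | nex].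
  by apply: (IH m) => //; rewrite -ltnS; apply: leq_trans mn le.
exists n; split => // m Pm; rewrite leqNgt; apply/negP => mn; apply: nex; by exists m.
Qed.

Lemma phylo_spec (T : finType) (e : rel T) : (exists k, has_phylo_digraph e k) ->
  has_phylo_digraph e (phylogeny_number e) /\
  forall k, has_phylo_digraph e k -> phylogeny_number e <= k.
Proof.
move=> ex; rewrite /phylogeny_number.
exact: (epsilon_spec (inhabits 0%N)
  (fun p => has_phylo_digraph e p /\ forall k, has_phylo_digraph e k -> (p <= k)%N) (min_ex ex)).
Qed.

Section Basic.
Variable T : finType.
Variable e : rel T.
Hypothesis e_sym : symmetric e.
Hypothesis e_irr : irreflexive e.

Lemma cliqueP (A : {set T}) :
  reflect (forall x y, x \in A -> y \in A -> x != y -> e x y) (is_clique e A).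
Proof.
apply: (iffP forallP) => [H x y xA yA xy | H x].
  by move: (H x); rewrite xA /= => /forallP /(_ y); rewrite yA xy.
apply/implyP => xA; apply/forallP => y; apply/implyP => yA; apply/implyP.
exact: H.
Qed.

Lemma edge_neq (u v : T) : e u v -> u != v.
Proof. by apply: contraTneq => ->; rewrite e_irr. Qed.

Lemma edgeE (u v : T) : ([set u; v] \in edge_set e) = e u v.
Proof.
rewrite inE cards2.
apply/andP/idP => [[h /cliqueP H] | euv].
  have uv : u != v by move: h; case: (u != v).
  by apply: H; rewrite ?inE ?eqxx ?orbT.
split; first by rewrite (edge_neq euv).
apply/cliqueP => x y; rewrite !inE => /orP[] /eqP -> /orP[] /eqP -> //;
  by rewrite ?eqxx // e_sym.
Qed.

Lemma edge_setP (g : {set T}) : g \in edge_set e -> exists u v, [/\ e u v, u != v & g = [set u; v]].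
Proof.
rewrite inE => /andP [/cards2P [u [v [uv ->]]] /cliqueP H].
exists u, v; split => //; apply: H => //; rewrite !inE eqxx ?orbT //.
Qed.

Lemma cards3 (a b c : T) : a != b -> b != c -> a != c -> #|[set a; b; c]| = 3.
Proof.
move=> ab bc ac; rewrite -setUA cardsU1 cards2 bc !inE negb_or ab ac.
by [].
Qed.

Lemma cards3E (a b c : T) : #|[set a; b; c]| = 3 -> [/\ a != b, b != c & a != c].
Proof.
move=> h; split; apply/negP => /eqP E; move: h; rewrite E.
- by rewrite -setUA setUA setUid cards2; case: (_ != _).
- by rewrite -setUA setUid cards2; case: (_ != _).
- by rewrite -setUA (setUC [set b]) setUA setUid cards2; case: (_ != _).
Qed.

Lemma in_set3 (a b c x : T) : x \in [set a; b; c] -> [\/ x = a, x = b | x = c].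
Proof. by rewrite !inE => /orP[/orP[]|] /eqP ->; [constructor 1|constructor 2|constructor 3]. Qed.

Lemma triE (a b c : T) : ([set a; b; c] \in triangles e) = [&& e a b, e b c & e a c].
Proof.
rewrite inE; apply/andP/idP => [[/eqP c3 /cliqueP H] | /and3P [ab bc ac]].
  case: (cards3E c3) => nab nbc nac.
  by rewrite !H // !inE eqxx ?orbT.
split; first by rewrite cards3 // edge_neq.
apply/cliqueP => x y /in_set3 [] -> /in_set3 [] -> //;
  by rewrite ?eqxx // e_sym.
Qed.


Lemma sub_card_eq (A B : {set T}) : A \subset B -> #|B| <= #|A| -> A = B.
Proof. by move=> sAB cBA; apply/eqP; rewrite eqEcard sAB cBA. Qed.

Lemma set3_of (D : {set T}) (a b : T) : #|D| = 3 -> a \in D -> b \in D -> a != b ->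
  exists z, [/\ z \in D, z != a, z != b & D = [set a; b; z]].
Proof.
move=> c3 aD bD ab.
have sab : [set a; b] \subset D by apply/subsetP => y /set2P [] ->.
have : #|D :\: [set a; b]| == 1 by rewrite cardsDS // c3 cards2 ab.
case/cards1P => z Hz.
have zD : z \in D :\: [set a; b] by rewrite Hz set11.
move: (zD); rewrite inE !inE negb_or => /andP [/andP [za zb] zD'].
exists z; split => //.
apply/esym/sub_card_eq.
  apply/subsetP => y; rewrite !inE => /orP [/orP []|] /eqP -> //.
by rewrite c3 cards3 // eq_sym.
Qed.

Lemma tri_pair (D : {set T}) (a b : T) : D \in triangles e -> a \in D -> b \in D -> a != b ->
  exists z, [/\ D = [set a; b; z], e a b, e a z & e b z].
Proof.
rewrite inE => /andP [/eqP c3 /cliqueP H] aD bD ab.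
case: (set3_of c3 aD bD ab) => z [zD za zb ->].
by exists z; split => //; apply: H => //; rewrite eq_sym.
Qed.

Lemma tri_form (D : {set T}) : D \in triangles e ->
  exists a b c, [/\ D = [set a; b; c], e a b, e b c & e a c].
Proof.
move=> Dt; move: (Dt); rewrite inE => /andP [/eqP c3 _].
have : 1 < #|D| by rewrite c3.
case/card_gt1P => a [b [aD bD ab]].
case: (tri_pair Dt aD bD ab) => z [-> eab eaz ebz].
by exists a, b, z.
Qed.

Lemma tri_edge_sub (D : {set T}) (g : {set T}) : D \in triangles e -> g \subset D -> #|g| = 2 ->
  g \in edge_set e.
Proof.
rewrite inE => /andP [_ /cliqueP H] gD /eqP g2.
rewrite inE g2 /=; apply/cliqueP => x y xg yg xy.
by apply: H => //; apply: (subsetP gD).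
Qed.

Lemma in_set4 (a b c d x : T) : x \in [set a; b; c; d] -> [\/ x = a, x = b, x = c | x = d].
Proof.
by rewrite !inE => /orP[/orP[/orP[]|]|] /eqP ->;
  [constructor 1|constructor 2|constructor 3|constructor 4].
Qed.

Lemma cards4 (a b c d : T) : a != b -> a != c -> a != d -> b != c -> b != d -> c != d ->
  #|[set a; b; c; d]| = 4.
Proof.
move=> ab ac ad bc bd cd.
rewrite -!setUA cardsU1 setUA cards3 // !inE !negb_or ab ac ad.
by [].
Qed.

Hypothesis K4 : K4_free e.
Hypothesis Ddisj : diamonds_edge_disjoint e.

Lemma noK4 (a b c d : T) : e a b -> e a c -> e a d -> e b c -> e b d -> e c d -> False.
Proof.
move=> ab ac ad bc bd cd.
have := K4 (cards4 (edge_neq ab) (edge_neq ac) (edge_neq ad) (edge_neq bc) (edge_neq bd) (edge_neq cd)).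
move/negP; apply; apply/cliqueP => x y /in_set4 [] -> /in_set4 [] -> //;
  by rewrite ?eqxx // e_sym.
Qed.


Definition Fw (W : {set T}) : {set {set T}} := [set f in edge_set e | f \subset W].
Definition P2 (W : {set T}) : {set {set T}} := [set f : {set T} | f \subset W & #|f| == 2].

Lemma inFw (W f : {set T}) : (f \in Fw W) = (f \in edge_set e) && (f \subset W).
Proof. by rewrite /Fw [in LHS]inE. Qed.

Lemma inP2 (W f : {set T}) : (f \in P2 W) = (f \subset W) && (#|f| == 2).
Proof. by rewrite /P2 inE. Qed.

Lemma edge_card2 (f : {set T}) : f \in edge_set e -> #|f| = 2.
Proof. by rewrite inE => /andP [/eqP]. Qed.

Lemma card_P2 W : #|P2 W| = 'C(#|W|, 2).
Proof. exact: cards_draws. Qed.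

Lemma in_P2 (W : {set T}) u v : u \in W -> v \in W -> u != v -> [set u; v] \in P2 W.
Proof.
move=> uW vW uv; rewrite inE cards2 uv andbT.
by apply/subsetP => y /set2P [] ->.
Qed.

Lemma P2_form (W f : {set T}) : f \in P2 W -> exists u v, [/\ u \in W, v \in W, u != v & f = [set u; v]].
Proof.
rewrite inE => /andP [fW /cards2P [u [v [uv fE]]]].
exists u, v; split => //; apply: (subsetP fW); rewrite fE !inE eqxx ?orbT //.
Qed.

Lemma set2C (u v : T) : [set u; v] = [set v; u].
Proof. by rewrite setUC. Qed.

Lemma diamC (a b c x : T) : e a b -> e a c -> e a x -> e b c -> e b x -> ~~ e c x -> c != x ->
  Fw [set a; b; c; x] \in diamonds e /\ \bigcup_(f in Fw [set a; b; c; x]) f = [set a; b; c; x].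
Proof.
move=> ab ac ax bc bx ncx cx.
set W := [set a; b; c; x].
have W4 : #|W| = 4 by rewrite cards4 // edge_neq.
have aW : a \in W by rewrite !inE eqxx.
have bW : b \in W by rewrite !inE eqxx !orbT.
have cW : c \in W by rewrite !inE eqxx !orbT.
have xW : x \in W by rewrite !inE eqxx !orbT.
have FE : Fw W = P2 W :\ [set c; x].
  apply/setP => f; rewrite inFw in_setD1 inP2; apply/andP/idP.
    case=> fE fW; rewrite fW edge_card2 // eqxx !andbT.
    by apply: contraTneq fE => ->; rewrite edgeE.
  case/andP => fcx /andP [fW f2]; rewrite fW; split => //.
  case/cards2P: f2 fcx fW => u [v [uv ->]] fcx fW; rewrite edgeE.
  have uW : u \in W by apply: (subsetP fW); rewrite !inE eqxx.
  have vW : v \in W by apply: (subsetP fW); rewrite !inE eqxx orbT.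
  move: uv fcx.
  by case/in_set4: uW => ->; case/in_set4: vW => -> uv fcx;
    first [ done | by rewrite e_sym | by rewrite eqxx in uv | by rewrite eqxx in fcx
          | by rewrite set2C eqxx in fcx ].
have cxP : [set c; x] \in P2 W by apply: in_P2.
have C5 : #|Fw W| = 5.
  rewrite FE; have b42 : 'C(4, 2) = 6 by [].
  move: (cardsD1 [set c; x] (P2 W)); rewrite cxP card_P2 W4 b42 /= add1n => h.
  by case: h.
have UE : \bigcup_(f in Fw W) f = W.
  apply/eqP; rewrite eqEsubset; apply/andP; split.
    by apply/bigcupsP => f; rewrite inFw => /andP [].
  apply/subsetP => y yW; apply/bigcupP.
  case/in_set4: yW => ->.
  + exists [set a; b]; last by rewrite !inE eqxx.
    by rewrite inFw edgeE ab; apply/subsetP => z /set2P [] ->.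
  + exists [set a; b]; last by rewrite !inE eqxx orbT.
    by rewrite inFw edgeE ab; apply/subsetP => z /set2P [] ->.
  + exists [set a; c]; last by rewrite !inE eqxx orbT.
    by rewrite inFw edgeE ac; apply/subsetP => z /set2P [] ->.
  + exists [set a; x]; last by rewrite !inE eqxx orbT.
    by rewrite inFw edgeE ax; apply/subsetP => z /set2P [] ->.
split => //.
rewrite inE UE W4 C5 !eqxx !andbT.
by apply/subsetP => f; rewrite inFw => /andP [].
Qed.

Lemma diamS (F : {set {set T}}) : F \in diamonds e ->
  exists a b c x, [/\ [/\ e a b, e a c, e a x, e b c & e b x], ~~ e c x, c != x &
                     F = Fw [set a; b; c; x]].
Proof.
rewrite inE => /and3P [sFE /eqP F5 /eqP W4].
set W := \bigcup_(f in F) f in W4.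
have sFP : F \subset P2 W.
  apply/subsetP => f fF; rewrite inP2 edge_card2 ?(subsetP sFE) // eqxx andbT.
  exact: (bigcup_sup f fF).
case: (boolP (P2 W \subset edge_set e)) => [sPE | /subsetPn [g gP gE]].
  exfalso; have := K4 W4; move/negP; apply; apply/cliqueP => u v uW vW uv.
  by rewrite -edgeE (subsetP sPE) // in_P2.
have gF : g \notin F by apply: contra gE; apply: (subsetP sFE).
have b42 : 'C(4, 2) = 6 by [].
have FE : F = P2 W :\ g.
  apply: subcardeq.
    by apply/subsetP => f fF; rewrite in_setD1 (subsetP sFP) // andbT; apply: contraNneq gF => <-.
  move: (cardsD1 g (P2 W)); rewrite gP card_P2 W4 b42 F5 /= add1n => h.
  by case: h => <-.
case: (P2_form gP) => c [x [cW xW cx gE']].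
move: gE; rewrite gE' edgeE => ncx.
have : #|W :\: [set c; x]| == 2.
  rewrite cardsDS ?W4 ?cards2 ?cx //.
  by apply/subsetP => y /set2P [] ->.
case/cards2P => a [b [ab WD]].
have aWD : a \in W :\: [set c; x] by rewrite WD !inE eqxx.
have bWD : b \in W :\: [set c; x] by rewrite WD !inE eqxx orbT.
move: aWD bWD; rewrite !inE !negb_or => /andP [/andP [ac ax] aW] /andP [/andP [bc bx] bW].
have adj : forall u v, u \in W -> v \in W -> u != v -> u \notin [set c; x] -> e u v.
  move=> u v uW vW uv ug; rewrite -edgeE -/(Fw _).
  have : [set u; v] \in F.
    by rewrite FE in_setD1 in_P2 // andbT gE'; apply: contraNneq ug => <-; rewrite !inE eqxx.
  exact: (subsetP sFE).
have WE : W = [set a; b; c; x].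
  apply/esym/sub_card_eq.
    by apply/subsetP => y /in_set4 [] ->.
  by rewrite W4 cards4 // eq_sym.
have nag : a \notin [set c; x] by rewrite !inE negb_or ac ax.
have nbg : b \notin [set c; x] by rewrite !inE negb_or bc bx.
exists a, b, c, x; split => //.
  split; apply: adj => //; by rewrite eq_sym.
rewrite -WE; apply/setP => f; rewrite inFw FE in_setD1 inP2.
apply/andP/andP => [[fg /andP [fW f2]] | [fE fW]].
  split => //; apply: (subsetP sFE); rewrite FE in_setD1 fg inP2 fW f2 //.
rewrite fW edge_card2 // eqxx; split => //.
by apply: contraNneq ncx => fgE; rewrite -edgeE -gE' -fgE.
Qed.

Definition dconf (a b c x : T) : Prop :=
  [/\ [/\ e a b, e a c, e a x, e b c & e b x], ~~ e c x & c != x].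

Lemma mk_conf (a b c x : T) : e a b -> e a c -> e a x -> e b c -> e b x -> c != x ->
  dconf a b c x.
Proof.
move=> ab ac ax bc bx cx; split => //.
by apply/negP => cx'; apply: (noK4 ab ac ax bc bx cx').
Qed.

Lemma pair_in_Fw (W : {set T}) u v : e u v -> u \in W -> v \in W -> [set u; v] \in Fw W.
Proof.
move=> uv uW vW; rewrite inFw edgeE uv /=.
by apply/subsetP => y /set2P [] ->.
Qed.

Lemma diam_share (F1 F2 : {set {set T}}) f : F1 \in diamonds e -> F2 \in diamonds e ->
  f \in F1 -> f \in F2 -> F1 = F2.
Proof.
move=> D1 D2 f1 f2; apply/eqP; apply/negPn/negP => ne.
have := Ddisj D1 D2 ne; move/disjoint_setI0 => h.
have : f \in F1 :&: F2 by rewrite inE f1 f2.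
by rewrite h inE.
Qed.

Lemma conf_eq (a b c x a' b' c' x' : T) (f : {set T}) :
  dconf a b c x -> dconf a' b' c' x' ->
  f \in Fw [set a; b; c; x] -> f \in Fw [set a'; b'; c'; x'] ->
  [set a; b; c; x] = [set a'; b'; c'; x'].
Proof.
case=> [[ab ac ax bc bx] ncx cx] [[ab' ac' ax' bc' bx'] ncx' cx'] f1 f2.
case: (diamC ab ac ax bc bx ncx cx) => D1 U1.
case: (diamC ab' ac' ax' bc' bx' ncx' cx') => D2 U2.
by rewrite -U1 -U2 (diam_share D1 D2 f1 f2).
Qed.

Lemma in4a (a b c d : T) : a \in [set a; b; c; d]. Proof. by rewrite !inE eqxx. Qed.
Lemma in4b (a b c d : T) : b \in [set a; b; c; d]. Proof. by rewrite !inE eqxx !orbT. Qed.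
Lemma in4c (a b c d : T) : c \in [set a; b; c; d]. Proof. by rewrite !inE eqxx !orbT. Qed.
Lemma in4d (a b c d : T) : d \in [set a; b; c; d]. Proof. by rewrite !inE eqxx !orbT. Qed.

Lemma three_tri (a b c x y : T) : e a b -> e a c -> e b c -> e a x -> e b x -> e a y -> e b y ->
  c != x -> c != y -> x != y -> False.
Proof.
move=> ab ac bc ax bx ay byy cx cy xy.
have C1 := mk_conf ab ac ax bc bx cx.
have C2 := mk_conf ab ac ay bc byy cy.
have WE := conf_eq C1 C2 (pair_in_Fw ab (in4a _ _ _ _) (in4b _ _ _ _))
  (pair_in_Fw ab (in4a _ _ _ _) (in4b _ _ _ _)).
have : x \in [set a; b; c; y] by rewrite -WE !inE eqxx orbT.
case/in_set4 => xE.
- by move: ax; rewrite xE e_irr.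
- by move: bx; rewrite xE e_irr.
- by move: cx; rewrite xE eqxx.
- by move: xy; rewrite xE eqxx.
Qed.

Lemma two_shared (a b c x y : T) : e a b -> e b c -> e a c -> e a x -> e b x -> x != c ->
  e b y -> e c y -> y != a -> False.
Proof.
move=> ab bc ac ax bx xc byy cy ya.
have cx : c != x by rewrite eq_sym.
have ay : a != y by rewrite eq_sym.
have ba : e b a by rewrite e_sym.
have ca : e c a by rewrite e_sym.
have C1 := mk_conf ab ac ax bc bx cx.
have C2 := mk_conf bc ba byy ca cy ay.
have WE := conf_eq C1 C2 (pair_in_Fw ab (in4a _ _ _ _) (in4b _ _ _ _))
  (pair_in_Fw ab (in4c _ _ _ _) (in4a _ _ _ _)).
have : x \in [set b; c; a; y] by rewrite -WE !inE eqxx orbT.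
case: C1 => _ ncx _.
case/in_set4 => xE.
- by move: bx; rewrite xE e_irr.
- by move: xc; rewrite xE eqxx.
- by move: ax; rewrite xE e_irr.
- by move: ncx; rewrite xE cy.
Qed.

Definition Ntri (g : {set T}) : nat := #|[set D in triangles e | g \subset D]|.

Lemma inTS (g D : {set T}) : (D \in [set D in triangles e | g \subset D]) = (D \in triangles e) && (g \subset D).
Proof. by rewrite [in LHS]inE. Qed.

Lemma Ntri_le2 (g : {set T}) : g \in edge_set e -> Ntri g <= 2.
Proof.
case/edge_setP => a [b [ab nab ->]].
rewrite leqNgt; apply/negP => /card_gt2P [D1 [D2 [D3 [[h1 h2 h3] [d12 d23 d31]]]]].
move: h1 h2 h3; rewrite !inTS => /andP [t1 s1] /andP [t2 s2] /andP [t3 s3].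
have aI (D : {set T}) : [set a; b] \subset D -> a \in D by move/subsetP; apply; rewrite !inE eqxx.
have bI (D : {set T}) : [set a; b] \subset D -> b \in D by move/subsetP; apply; rewrite !inE eqxx orbT.
case: (tri_pair t1 (aI _ s1) (bI _ s1) nab) => z1 [E1 _ az1 bz1].
case: (tri_pair t2 (aI _ s2) (bI _ s2) nab) => z2 [E2 _ az2 bz2].
case: (tri_pair t3 (aI _ s3) (bI _ s3) nab) => z3 [E3 _ az3 bz3].
apply: (three_tri ab az1 bz1 az2 bz2 az3 bz3).
- by apply: contraNneq d12 => ez; rewrite E1 E2 ez.
- by apply: contraNneq d31 => ez; rewrite E1 E3 ez.
- by apply: contraNneq d23 => ez; rewrite E2 E3 ez.
Qed.

Lemma unshared (D : {set T}) : D \in triangles e ->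
  exists g, [/\ g \in edge_set e, g \subset D &
                forall D', D' \in triangles e -> g \subset D' -> D' = D].
Proof.
move=> Dt; case: (tri_form Dt) => a [b [c [DE ab bc ac]]].
have sub2 (u v : T) : u \in D -> v \in D -> [set u; v] \subset D.
  by move=> uD vD; apply/subsetP => y /set2P [] ->.
have aD : a \in D by rewrite DE !inE eqxx.
have bD : b \in D by rewrite DE !inE eqxx orbT.
have cD : c \in D by rewrite DE !inE eqxx orbT.
pose sh (u v : T) := [exists D' in triangles e, ([set u; v] \subset D') && (D' != D)].
case: (boolP (sh a b)) => [/exists_inP [D1 t1 /andP [s1 n1]] | nsab]; last first.
  exists [set a; b]; split; rewrite ?edgeE ?sub2 //.
  move=> D' t' s'; apply/eqP; apply/negPn/negP => n'; move/exists_inP: nsab; apply.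
  by exists D' => //; rewrite s' n'.
case: (boolP (sh b c)) => [/exists_inP [D2 t2 /andP [s2 n2]] | nsbc]; last first.
  exists [set b; c]; split; rewrite ?edgeE ?sub2 //.
  move=> D' t' s'; apply/eqP; apply/negPn/negP => n'; move/exists_inP: nsbc; apply.
  by exists D' => //; rewrite s' n'.
exfalso.
have aI : a \in D1 by apply: (subsetP s1); rewrite !inE eqxx.
have bI : b \in D1 by apply: (subsetP s1); rewrite !inE eqxx orbT.
have bI2 : b \in D2 by apply: (subsetP s2); rewrite !inE eqxx.
have cI2 : c \in D2 by apply: (subsetP s2); rewrite !inE eqxx orbT.
case: (tri_pair t1 aI bI (edge_neq ab)) => x [E1 _ ax bx].
case: (tri_pair t2 bI2 cI2 (edge_neq bc)) => y [E2 _ byy cy].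
apply: (two_shared ab bc ac ax bx _ byy cy _).
- by apply: contraNneq n1 => xc; rewrite E1 xc DE.
- apply: contraNneq n2 => ya; rewrite E2 ya DE.
  by apply/eqP/setP => w; rewrite !inE; case: (w == a); case: (w == b); case: (w == c).
Qed.

Definition TS (g : {set T}) : {set {set T}} := [set D in triangles e | g \subset D].
Definition TE : {set {set T}} := [set g in edge_set e | 0 < Ntri g].
Definition DE : {set {set T}} := [set g in edge_set e | 1 < Ntri g].

Lemma P2_tri (D : {set T}) : D \in triangles e -> [set g in edge_set e | g \subset D] = P2 D.
Proof.
move=> Dt; apply/setP => g; rewrite inE inP2; apply/andP/andP => [[gE gD] | [gD /eqP g2]].
  by rewrite gD edge_card2.
by split => //; apply: (tri_edge_sub Dt).
Qed.

Lemma count_TE_DE : #|TE| + #|DE| = 3 * tcount e.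
Proof.
have L : \sum_(D in triangles e) \sum_(g in edge_set e) ((g \subset D) : nat) = 3 * tcount e.
  rewrite mulnC /tcount -sum_nat_const; apply: eq_bigr => D Dt.
  rewrite -card_cond P2_tri // card_P2.
  by move: Dt; rewrite inE => /andP [/eqP -> _].
rewrite -L exchange_big /= /TE /DE !card_cond -big_split /=.
apply: eq_bigr => g gE.
have := Ntri_le2 gE; rewrite /Ntri card_cond.
by case: (\sum_(i in triangles e) _) => [|[|[|]]].
Qed.

Definition spineOf (W : {set T}) : {set T} :=
  [set v in W | [forall u in W, (u != v) ==> e u v]].

Lemma spine_conf (a b c x : T) : dconf a b c x -> spineOf [set a; b; c; x] = [set a; b].
Proof.
case=> [[ab ac ax bc bx] ncx cx].
have ba : e b a by rewrite e_sym.
have ca : e c a by rewrite e_sym.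
have xa : e x a by rewrite e_sym.
have cb : e c b by rewrite e_sym.
have xb : e x b by rewrite e_sym.
apply/setP => v; rewrite /spineOf inE.
apply/andP/idP => [[vW /forall_inP H] | vab].
  case/in_set4: vW => vE; rewrite vE ?inE ?eqxx ?orbT //.
    by move: (H x (in4d _ _ _ _)); rewrite vE eq_sym cx /= e_sym (negbTE ncx).
  by move: (H c (in4c _ _ _ _)); rewrite vE cx /= (negbTE ncx).
have vW : v \in [set a; b; c; x] by move: vab; rewrite !inE => /orP [] ->; rewrite ?orbT.
split => //; apply/forall_inP => u /in_set4 uE; apply/implyP => uv.
move: vab uv; rewrite !inE => /orP [] /eqP ->; case: uE => ->; by rewrite ?eqxx.
Qed.

Definition Wg (g : {set T}) : {set T} := \bigcup_(D in TS g) D.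

Lemma Wg_conf (a b c x : T) : dconf a b c x -> Wg [set a; b] = [set a; b; c; x].
Proof.
move=> C; case: (C) => [[ab ac ax bc bx] ncx cx].
have t1 : [set a; b; c] \in triangles e by rewrite triE ab bc ac.
have t2 : [set a; b; x] \in triangles e by rewrite triE ab bx ax.
have s3 (y : T) : [set a; b] \subset [set a; b; y] by apply/subsetP => z /set2P [] ->; rewrite !inE eqxx ?orbT.
apply/eqP; rewrite eqEsubset; apply/andP; split.
  apply/bigcupsP => D; rewrite inTS => /andP [Dt sD].
  have aD : a \in D by apply: (subsetP sD); rewrite !inE eqxx.
  have bD : b \in D by apply: (subsetP sD); rewrite !inE eqxx orbT.
  case: (tri_pair Dt aD bD (edge_neq ab)) => z [-> _ az bz].
  have zcx : (z == c) || (z == x).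
    case: (boolP (z == c)) => // zc; case: (boolP (z == x)) => // zx; exfalso.
    by apply: (three_tri ab ac bc ax bx az bz cx); rewrite eq_sym.
  apply/subsetP => y /in_set3 [] ->; rewrite ?in4a ?in4b //.
  by case/orP: zcx => /eqP ->; rewrite ?in4c ?in4d.
apply/subsetP => y /in_set4 [] ->.
- by apply/bigcupP; exists [set a; b; c]; rewrite ?inTS ?t1 ?s3 // !inE eqxx.
- by apply/bigcupP; exists [set a; b; c]; rewrite ?inTS ?t1 ?s3 // !inE eqxx orbT.
- by apply/bigcupP; exists [set a; b; c]; rewrite ?inTS ?t1 ?s3 // !inE eqxx orbT.
- by apply/bigcupP; exists [set a; b; x]; rewrite ?inTS ?t2 ?s3 // !inE eqxx orbT.
Qed.

Lemma DE_form (g : {set T}) : g \in DE ->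
  exists a b c x, [/\ dconf a b c x, g = [set a; b] & Wg g = [set a; b; c; x]].
Proof.
rewrite inE => /andP [gE]; rewrite /Ntri => /card_gt1P [D1 [D2 [h1 h2 d12]]].
move: h1 h2; rewrite !inTS => /andP [t1 s1] /andP [t2 s2].
case/edge_setP: gE s1 s2 => a [b [ab nab gE]] s1 s2.
rewrite gE in s1 s2 *.
have aI (D : {set T}) : [set a; b] \subset D -> a \in D by move/subsetP; apply; rewrite !inE eqxx.
have bI (D : {set T}) : [set a; b] \subset D -> b \in D by move/subsetP; apply; rewrite !inE eqxx orbT.
case: (tri_pair t1 (aI _ s1) (bI _ s1) nab) => c [E1 _ ac bc].
case: (tri_pair t2 (aI _ s2) (bI _ s2) nab) => x [E2 _ ax bx].
have cx : c != x by apply: contraNneq d12 => cxE; rewrite E1 E2 cxE.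
have C := mk_conf ab ac ax bc bx cx.
by exists a, b, c, x; split => //; apply: Wg_conf.
Qed.

Definition phiD (g : {set T}) : {set {set T}} := Fw (Wg g).

Lemma count_DE : #|DE| = dcount e.
Proof.
rewrite /dcount.
have inj : {in DE &, injective phiD}.
  move=> g1 g2 h1 h2 eq12.
  case: (DE_form h1) => a [b [c [x [C1 gE1 W1]]]].
  case: (DE_form h2) => a' [b' [c' [x' [C2 gE2 W2]]]].
  case: (C1) => [[ab ac ax bc bx] ncx cx].
  case: (C2) => [[ab' ac' ax' bc' bx'] ncx' cx'].
  have U1 := (diamC ab ac ax bc bx ncx cx).2.
  have U2 := (diamC ab' ac' ax' bc' bx' ncx' cx').2.
  move: eq12; rewrite /phiD W1 W2 => eq12.
  rewrite gE1 gE2 -(spine_conf C1) -(spine_conf C2); congr spineOf.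
  by rewrite -U1 -U2 eq12.
rewrite -(card_in_imset inj).
suff -> : phiD @: DE = diamonds e by [].
apply/setP => F; apply/imsetP/idP => [[g gD ->] | FD].
  case: (DE_form gD) => a [b [c [x [[[ab ac ax bc bx] ncx cx] _ W1]]]].
  by rewrite /phiD W1; case: (diamC ab ac ax bc bx ncx cx).
case: (diamS FD) => a [b [c [x [[ab ac ax bc bx] ncx cx FE]]]].
have C : dconf a b c x by [].
exists [set a; b]; last by rewrite /phiD (Wg_conf C).
rewrite inE edgeE ab /=; apply/card_gt1P; exists [set a; b; c], [set a; b; x].
have s3 (y : T) : [set a; b] \subset [set a; b; y] by apply/subsetP => z /set2P [] ->; rewrite !inE eqxx ?orbT.
rewrite !inTS !triE ab ac bc ax bx !s3; split => //.
apply/negP => /eqP E; have : x \in [set a; b; c] by rewrite E !inE eqxx orbT.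
case/in_set3 => xE.
- by move: ax; rewrite xE e_irr.
- by move: bx; rewrite xE e_irr.
- by move: cx; rewrite xE eqxx.
Qed.

Lemma count_NT : #|edge_set e :\: TE| + 3 * tcount e = #|edge_set e| + dcount e.
Proof.
rewrite -count_DE -count_TE_DE addnA; congr (_ + _).
have sTE : TE \subset edge_set e by apply/subsetP => g; rewrite inE => /andP [].
by rewrite cardsDS // subnK // subset_leq_card.
Qed.

Definition NT : {set {set T}} := edge_set e :\: TE.

Lemma NT_notri (g D : {set T}) : g \in NT -> D \in triangles e -> ~~ (g \subset D).
Proof.
rewrite /NT in_setD => /andP [gnTE gE] Dt; apply/negP => gD.
move: gnTE; rewrite /TE inE gE /= -leqNgt leqn0 /Ntri cards_eq0 => /eqP TS0.
have : D \in [set D in triangles e | g \subset D] by rewrite inTS Dt gD.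
by rewrite TS0 inE.
Qed.

Lemma NT_edge (g : {set T}) : g \in NT -> g \in edge_set e.
Proof. by rewrite inE => /andP []. Qed.

Lemma NT_em (u v : T) : [set u; v] \in NT -> eminus e u v.
Proof.
move=> h; have := NT_edge h; rewrite edgeE => uv.
rewrite /eminus /triangle_edge uv /=; apply/existsPn => w; apply/negP => /andP [uw vw].
have Dt : [set u; v; w] \in triangles e by rewrite triE uv uw vw.
have := NT_notri h Dt; move/negP; apply.
by apply/subsetP => y /set2P [] ->; rewrite !inE eqxx ?orbT.
Qed.

Lemma em_NT (u v : T) : eminus e u v -> [set u; v] \in NT.
Proof.
rewrite /eminus /triangle_edge => /andP [uv]; rewrite uv /= => /existsPn nw.
rewrite /NT in_setD edgeE uv andbT /TE inE edgeE uv /= -leqNgt leqn0 /Ntri cards_eq0.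
apply/eqP/setP => D; rewrite inTS [RHS]inE; apply/negP => /andP [Dt sD].
have uD : u \in D by apply: (subsetP sD); rewrite !inE eqxx.
have vD : v \in D by apply: (subsetP sD); rewrite !inE eqxx orbT.
case: (tri_pair Dt uD vD (edge_neq uv)) => z [_ _ uz vz].
by move: (nw z); rewrite uz vz.
Qed.

Lemma em_sym : symmetric (eminus e).
Proof.
move=> u v; rewrite /eminus /triangle_edge e_sym; case: (e v u) => //=.
apply/congr1; apply/existsP/existsP => [] [w /andP [h1 h2]]; exists w; by rewrite h1 h2.
Qed.

Definition unsh (D g : {set T}) : bool :=
  [&& g \in edge_set e, g \subset D & [forall D' in triangles e, (g \subset D') ==> (D' == D)]].

Lemma unsh_ex (D : {set T}) : D \in triangles e -> exists g, unsh D g.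
Proof.
move=> Dt; case: (unshared Dt) => g [gE gD H]; exists g.
rewrite /unsh gE gD /=; apply/forall_inP => D' t'; apply/implyP => s'.
by rewrite (H D' t' s').
Qed.

Definition comps : {set {set T}} := [set [set y | connect (eminus e) x y] | x : T].

Lemma comps_class (C : {set T}) w : C \in comps -> w \in C -> C = [set y | connect (eminus e) w y].
Proof.
case/imsetP => x _ -> ; rewrite inE => xw.
apply/setP => y; rewrite !inE.
by rewrite (same_connect (sym_connect_sym em_sym) xw).
Qed.

Lemma LB (k : nat) (D : rel (T + 'I_k)%type) : phylo_digraph e D -> 0 < #|T| ->
  #|NT| + tcount e + 1 <= #|T| + k /\ #|NT| + ncomp (eminus e) <= #|T| + k.
Proof.
case=> acyc adj noback Tn.
pose S (x : (T + 'I_k)%type) : {set T} := [set u | D (inl u) x || (x == inl u)].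
have SC x u v : u \in S x -> v \in S x -> u != v -> e u v.
  rewrite !inE => hu hv uv; rewrite (adj _ _ uv) /phylo_adj.
  case/orP: hu => [hu | /eqP xu]; case/orP: hv => [hv | /eqP xv].
  - by apply/orP; right; apply/orP; right; apply/existsP; exists x; rewrite hu hv.
  - by rewrite -xv hu.
  - by rewrite -xu hv orbT.
  - by move: uv; rewrite xu in xv; case: xv => ->; rewrite eqxx.
have SE u v : e u v -> exists x, (u \in S x) && (v \in S x).
  move=> uv; move: (uv); rewrite (adj _ _ (edge_neq uv)) /phylo_adj.
  case/or3P => [h | h | /existsP [w /andP [h1 h2]]].
  - by exists (inl v); rewrite !inE h eqxx orbT.
  - by exists (inl u); rewrite !inE h eqxx orbT.
  - by exists w; rewrite !inE h1 h2.
pose I1 := [set x | [exists g in NT, S x == g]].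
have c1 : #|NT| <= #|I1|.
  apply: card_le_rel => [g gN | g g' x _ _ /eqP <- /eqP //].
  case/edge_setP: (NT_edge gN) => u [v [uv nuv gE]].
  case: (SE u v uv) => x /andP [ux vx]; exists x; apply/eqP.
  apply/esym/subcardeq.
    by rewrite gE; apply/subsetP => y /set2P [] ->.
  rewrite gE cards2 nuv; apply: contraT; rewrite -ltnNge => gt2.
  have : 0 < #|S x :\: [set u; v]|.
    rewrite cardsD; have := subset_leq_card (subsetIr (S x) [set u; v]).
    rewrite cards2 nuv /=; move: gt2; lia.
  case/card_gt0P => y; rewrite in_setD => /andP [yuv yS]; move: yuv; rewrite !inE negb_or => /andP [yu yv].
  have vy : v != y by rewrite eq_sym.
  have uy : u != y by rewrite eq_sym.
  have Dt : [set u; v; y] \in triangles e.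
    by rewrite triE uv (SC x v y) // (SC x u y).
  suff gD : g \subset [set u; v; y] by move: (NT_notri gN Dt); rewrite gD.
  by rewrite gE; apply/subsetP => z /set2P [] ->; rewrite !inE eqxx ?orbT.
pose R2 (Dl : {set T}) x := [exists g, unsh Dl g && (g \subset S x)].
have SsubD Dl g x : unsh Dl g -> g \subset S x -> S x \subset Dl.
  case/and3P => gE gD /forall_inP H gS; apply/subsetP => y yS.
  case: (boolP (y \in g)) => yg; first exact: (subsetP gD).
  case/edge_setP: gE gD H gS yg => u [v [uv nuv ->]] gD H gS yg.
  have uS : u \in S x by apply: (subsetP gS); rewrite !inE eqxx.
  have vS : v \in S x by apply: (subsetP gS); rewrite !inE eqxx orbT.
  move: yg; rewrite !inE negb_or => /andP [yu yv].
  have vy : v != y by rewrite eq_sym.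
  have uy : u != y by rewrite eq_sym.
  have Dt : [set u; v; y] \in triangles e.
    by rewrite triE uv (SC x v y) // (SC x u y).
  have := H _ Dt; rewrite (_ : [set u; v] \subset _) /=.
    by move/eqP <-; rewrite !inE eqxx orbT.
  by apply/subsetP => z /set2P [] ->; rewrite !inE eqxx ?orbT.
pose I2 := [set x | [exists Dl in triangles e, R2 Dl x]].
have c2 : tcount e <= #|I2|.
  apply: card_le_rel => [Dl Dt | Dl Dl' x Dt Dt' /existsP [g /andP [ug gS]] /existsP [g' /andP [ug' gS']]].
    case: (unsh_ex Dt) => g ug; move: (ug) => /and3P [gE _ _].
    case/edge_setP: gE => u [v [uv _ gE]].
    case: (SE u v uv) => x /andP [ux vx]; exists x; apply/existsP; exists g; rewrite ug /= gE.
    by apply/subsetP => y /set2P [] ->.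
  have := SsubD _ _ _ ug' gS'; move=> sSD'.
  move: ug => /and3P [_ _ /forall_inP H].
  by apply/esym/eqP; apply: (implyP (H Dl' Dt')); apply: subset_trans gS sSD'.
have [w0 w0src] : exists w0 : T, forall u, ~~ D (inl u) (inl w0).
  have : [set inl u | u : T] != set0 :> {set (T + 'I_k)%type}.
    case/card_gt0P: Tn => t0 _; apply/set0Pn; exists (inl t0); apply/imsetP; exists t0 => //.
  case/(source_ex acyc) => w /imsetP [w0 _ ->] H; exists w0 => u.
  by apply: H; apply/imsetP; exists u.
have Sw0 : S (inl w0) = [set w0].
  apply/setP => y; rewrite !inE (negbTE (w0src y)) /=.
  by rewrite (inj_eq (@inl_inj _ _)) eq_sym.
pose I3 := [set (inl w0 : (T + 'I_k)%type)].
have d12 : I1 :&: I2 = set0.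
  apply/setP => x; rewrite !inE; apply/negP => /andP [/exists_inP [g gN /eqP Sg] /exists_inP [Dl Dt /existsP [g' /andP [ug' g'S]]]].
  move: ug' => /and3P [g'E g'D _].
  have gg' : g' = g.
    apply: subcardeq; first by rewrite -Sg.
    by rewrite !edge_card2 // NT_edge.
  by have := NT_notri gN Dt; rewrite -gg' g'D.
have d3 : (I1 :|: I2) :&: I3 = set0.
  apply/setP => x; rewrite !inE; apply/negP => /andP [/orP [] h /eqP xw].
    move: h; rewrite xw => /exists_inP [g gN /eqP Sg].
    by move: (edge_card2 (NT_edge gN)); rewrite -Sg Sw0 cards1.
  move: h; rewrite xw => /exists_inP [Dl Dt /existsP [g' /andP [/and3P [g'E _ _] g'S]]].
  by move: (subset_leq_card g'S); rewrite Sw0 cards1 edge_card2.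
pose R4 (C : {set T}) (x : (T + 'I_k)%type) := [exists w, [&& x == inl w, w \in C & [forall u in C, ~~ D (inl u) (inl w)]]].
pose I4 := [set x | [exists C in comps, R4 C x]].
have c4 : #|comps| <= #|I4|.
  apply: card_le_rel => [C Cc | C C' x Cc C'c /existsP [w /and3P [/eqP xw wC _]] /existsP [w' /and3P [/eqP xw' wC' _]]].
    have : [set inl u | u in C] != set0 :> {set (T + 'I_k)%type}.
      case/imsetP: (Cc) => x0 _ C0; apply/set0Pn; exists (inl x0); apply/imsetP; exists x0 => //.
      by rewrite C0 inE connect0.
    case/(source_ex acyc) => w /imsetP [w1 w1C ->] H; exists (inl w1); apply/existsP; exists w1.
    rewrite eqxx w1C /=; apply/forall_inP => u uC; apply: H; apply/imsetP; exists u => //.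
  move: xw'; rewrite xw => xw'; have ww' := inl_inj xw'; rewrite -ww' in wC'.
  by rewrite (comps_class Cc wC) (comps_class C'c wC').
have d14 : I1 :&: I4 = set0.
  apply/setP => x; rewrite !inE; apply/negP => /andP [/exists_inP [g gN /eqP Sg] /exists_inP [C Cc /existsP [w /and3P [/eqP xw wC /forall_inP H]]]].
  have wS : w \in S x by rewrite xw !inE eqxx orbT.
  have gEd := NT_edge gN.
  case/edge_setP: gEd Sg gN => u [v [uv nuv ->]] Sg gN.
  have [y [yS yw gE]] : exists y, [/\ y \in S x, y != w & [set u; v] = [set w; y]].
    move: wS; rewrite Sg !inE => /orP [] /eqP wE.
      exists v; split; first by rewrite !inE eqxx orbT.
        by rewrite wE eq_sym.
      by rewrite wE.
    exists u; split; first by rewrite !inE eqxx.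
      by rewrite wE.
    by rewrite wE set2C.
  move: yS; rewrite xw !inE (inj_eq (@inl_inj _ _)) eq_sym (negbTE yw) orbF => Dyw.
  have emwy : eminus e w y by apply: NT_em; rewrite -gE.
  have yC : y \in C by rewrite (comps_class Cc wC) inE connect1.
  by move: (H y yC); rewrite Dyw.
have Tk : #|{: T + 'I_k}| = #|T| + k by rewrite card_sum card_ord.
split.
  have := max_card (I1 :|: I2 :|: I3); rewrite Tk cardsU d3 cards0 subn0 cardsU d12 cards0 subn0 cards1.
  by move=> h; apply: leq_trans h; rewrite leq_add2r leq_add.
have := max_card (I1 :|: I4); rewrite Tk cardsU d14 cards0 subn0 => h; apply: leq_trans h.
by rewrite leq_add.
Qed.

Lemma construct (rk : T -> nat) (K : T -> {set T}) (Cs : seq {set T}) :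
  (forall v, v \in K v) ->
  (forall v, is_clique e (K v)) ->
  (forall v u, u \in K v -> u != v -> rk u < rk v) ->
  (forall C, C \in Cs -> is_clique e C) ->
  (forall u v, e u v -> (exists w, (u \in K w) && (v \in K w)) \/
                        (exists2 C, C \in Cs & (u \in C) && (v \in C))) ->
  has_phylo_digraph e (size Cs).
Proof.
move=> Kv Kc Krk Cc cover.
pose n := size Cs.
pose D (x y : (T + 'I_n)%type) : bool :=
  match x, y with
  | inl u, inl v => (u \in K v) && (u != v)
  | inl u, inr i => u \in nth set0 Cs i
  | inr _, _ => false
  end.
exists D; split.
- pose M := (\max_(v : T) rk v).+1.
  apply: (acyc_pot (phi := fun x => match x with inl v => rk v | inr _ => M end)).
  case=> [u|i] [v|j] //=.
    by case/andP => uK uv; apply: Krk.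
  by move=> _; rewrite ltnS; apply: (leq_bigmax_cond u).
- move=> u v uv; rewrite /phylo_adj /=.
  apply/idP/idP => [euv | ].
    case: (cover u v euv) => [[w /andP [uw vw]] | [C CC /andP [uC vC]]].
      case: (eqVneq w v) => [wv | wv].
        by subst w; apply/or3P; constructor 1; apply/andP; split.
      case: (eqVneq w u) => [wu | wu].
        by subst w; apply/or3P; constructor 2; apply/andP; split; rewrite // eq_sym.
      apply/orP; right; apply/orP; right; apply/existsP; exists (inl w) => /=.
      by rewrite uw vw eq_sym wu eq_sym wv.
    apply/orP; right; apply/orP; right; apply/existsP.
    have iC : index C Cs < n by rewrite index_mem.
    exists (inr (Ordinal iC)) => /=; by rewrite nth_index // uC vC.
  case/or3P => [/andP [uK _] | /andP [vK _] | /existsP [[w|i] /andP [h1 h2]]].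
  - by move/cliqueP: (Kc v); apply => //.
  - by move/cliqueP: (Kc u); apply => //; rewrite eq_sym.
  - move: h1 h2 => /= /andP [uK _] /andP [vK _].
    by move/cliqueP: (Kc w); apply.
  - move: h1 h2 => /= ui vi.
    have : nth set0 Cs i \in Cs by rewrite mem_nth.
    by move/Cc/cliqueP; apply.
- by [].
Qed.

Definition KK : {set {set T}} := NT :|: triangles e.

Lemma KK_clique C : C \in KK -> is_clique e C.
Proof.
rewrite inE => /orP [/NT_edge | ]; rewrite inE => /andP [] //.
Qed.

Lemma card_KK : #|KK| = #|NT| + tcount e.
Proof.
rewrite /KK cardsU; suff -> : NT :&: triangles e = set0 by rewrite cards0 subn0.
apply/setP => C; rewrite inE [RHS]inE; apply/negP => /andP [/NT_edge CE].
by rewrite inE edge_card2 // => /andP [].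
Qed.

Lemma UB (rk : T -> nat) (Z : {set T}) :
  (forall v, v \notin Z ->
     (exists u, eminus e u v /\ rk u < rk v) \/
     (exists D, [/\ D \in triangles e, v \in D & forall y, y \in D -> y != v -> rk y < rk v])) ->
  exists k, has_phylo_digraph e k /\ k + #|T| <= #|NT| + tcount e + #|Z|.
Proof.
move=> HZ.
pose good v C := [&& C \in KK, v \in C & [forall y in C, (y != v) ==> (rk y < rk v)]].
pose K v := odflt [set v] [pick C | good v C].
pose M := [set v | [exists C, good v C]].
have Kgood v : v \in M -> good v (K v).
  rewrite inE => /existsP [C gC]; rewrite /K; case: pickP => [C' //|H].
  by rewrite H in gC.
have Kv v : v \in K v.
  rewrite /K; case: pickP => [C /and3P [] //| _]; by rewrite /= set11.
have Kc v : is_clique e (K v).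
  rewrite /K; case: pickP => [C /and3P [CK _ _] | _ /=]; first exact: KK_clique.
  by apply/cliqueP => x y /set1P -> /set1P ->; rewrite eqxx.
have Krk v u : u \in K v -> u != v -> rk u < rk v.
  rewrite /K; case: pickP => [C /and3P [_ _ /forall_inP H] /= uC uv | _ /= /set1P ->].
    by move: (H u uC); rewrite uv.
  by rewrite eqxx.
have Kinj : {in M &, injective K}.
  move=> v w vM wM Kvw; apply/eqP; apply/negPn/negP => vw.
  have wK : w \in K v by rewrite Kvw.
  have vK : v \in K w by rewrite -Kvw.
  have wv : w != v by rewrite eq_sym.
  have h1 := Krk v w wK wv.
  have h2 := Krk w v vK vw.
  by move: (ltn_trans h1 h2); rewrite ltnn.
have sKM : K @: M \subset KK.
  by apply/subsetP => C /imsetP [v vM ->]; case/and3P: (Kgood v vM).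
pose Cs := enum (KK :\: K @: M).
have sizeCs : size Cs = #|KK| - #|M| by rewrite -cardE cardsDS // card_in_imset.
have Csc C : C \in Cs -> is_clique e C.
  by rewrite mem_enum inE => /andP [_]; apply: KK_clique.
have cover u v : e u v -> (exists w, (u \in K w) && (v \in K w)) \/
                        (exists2 C, C \in Cs & (u \in C) && (v \in C)).
  move=> uv.
  have [C [CK uC vC]] : exists C, [/\ C \in KK, u \in C & v \in C].
    case: (boolP ([set u; v] \in NT)) => h.
      exists [set u; v]; split; first by rewrite /KK in_setU h.
        by rewrite !inE eqxx.
      by rewrite !inE eqxx orbT.
    have : [set u; v] \in TE by move: h; rewrite /NT in_setD edgeE uv andbT negbK.
    rewrite /TE inE => /andP [_]; rewrite /Ntri => /card_gt0P [D]; rewrite inTS => /andP [Dt sD].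
    exists D; split; first by rewrite /KK in_setU Dt orbT.
      by apply: (subsetP sD); rewrite !inE eqxx.
    by apply: (subsetP sD); rewrite !inE eqxx orbT.
  case: (boolP (C \in K @: M)) => [/imsetP [w wM CE] | CnK].
    by left; exists w; rewrite -CE; apply/andP; split.
  right; exists C; last by apply/andP; split.
  by rewrite mem_enum in_setD CnK CK.
have HP := construct Kv Kc Krk Csc cover.
exists (size Cs); split => //.
have sZM : ~: Z \subset M.
  apply/subsetP => v; rewrite inE => vZ; rewrite inE; apply/existsP.
  case: (HZ v vZ) => [[u [uv ruv]] | [D [Dt vD HD]]].
    exists [set u; v]; rewrite /good /KK in_setU em_NT // !inE eqxx orbT /=.
    apply/forall_inP => y /set2P [] ->; apply/implyP => h //.
    by rewrite eqxx in h.
  exists D; rewrite /good /KK in_setU Dt orbT vD /=.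
  by apply/forall_inP => y yD; apply/implyP; apply: HD.
have TM : #|T| <= #|M| + #|Z|.
  by rewrite -(cardsC Z) addnC leq_add2r subset_leq_card.
have MK : #|M| <= #|KK| by rewrite -(card_in_imset Kinj) subset_leq_card.
rewrite sizeCs -card_KK; move: TM MK; lia.
Qed.

Lemma diam_Fw (F : {set {set T}}) : F \in diamonds e -> F = Fw (\bigcup_(f in F) f).
Proof.
case/diamS => a [b [c [x [[ab ac ax bc bx] ncx cx FE]]]].
have := (diamC ab ac ax bc bx ncx cx).2; rewrite -FE => ->; exact: FE.
Qed.

Lemma charge (H : {set {set T}}) : H \subset triangles e ->
  (forall D1 D2, D1 \in H -> D2 \in H -> D1 != D2 -> #|D1 :&: D2| <= 1) ->
  #|H| + dcount e <= tcount e.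
Proof.
move=> sHT Hdisj.
have : dcount e <= #|triangles e :\: H|.
  rewrite /dcount; apply: leq_trans (card_le_rel (A := diamonds e) (R := fun (F : {set {set T}}) (D : {set T}) => (D \in triangles e :\: H) && (D \subset \bigcup_(f in F) f)) _ _) _.
  - move=> F FD; case: (diamS FD) => a [b [c [x [[ab ac ax bc bx] ncx cx FE]]]].
    have U := (diamC ab ac ax bc bx ncx cx).2; rewrite -FE in U; rewrite U.
    have t1 : [set a; b; c] \in triangles e by rewrite triE ab bc ac.
    have t2 : [set a; b; x] \in triangles e by rewrite triE ab bx ax.
    have s1 : [set a; b; c] \subset [set a; b; c; x].
      by apply/subsetP => y /in_set3 [] ->; rewrite ?in4a ?in4b ?in4c.
    have s2 : [set a; b; x] \subset [set a; b; c; x].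
      by apply/subsetP => y /in_set3 [] ->; rewrite ?in4a ?in4b ?in4d.
    case: (boolP ([set a; b; c] \in H)) => h1; last by exists [set a; b; c]; rewrite in_setD h1 t1 s1.
    case: (boolP ([set a; b; x] \in H)) => h2; last by exists [set a; b; x]; rewrite in_setD h2 t2 s2.
    exfalso.
    have d12 : [set a; b; c] != [set a; b; x].
      apply/negP => /eqP E; have : x \in [set a; b; c] by rewrite E !inE eqxx orbT.
      case/in_set3 => xE.
      - by move: ax; rewrite xE e_irr.
      - by move: bx; rewrite xE e_irr.
      - by move: cx; rewrite xE eqxx.
    have := Hdisj _ _ h1 h2 d12.
    have sI : [set a; b] \subset [set a; b; c] :&: [set a; b; x].
      by apply/subsetP => y /set2P [] ->; rewrite !inE eqxx ?orbT.
    move: (subset_leq_card sI); rewrite cards2 (edge_neq ab) /=.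
    by move=> h h'; move: (leq_trans h h').
  - move=> F1 F2 D F1D F2D /andP [_ s1] /andP [Dt s2].
    move: Dt; rewrite in_setD => /andP [_ Dt].
    case: (tri_form Dt) => p [q [r [DE pq _ _]]].
    have pD : p \in D by rewrite DE !inE eqxx.
    have qD : q \in D by rewrite DE !inE eqxx orbT.
    apply: (diam_share F1D F2D (f := [set p; q])).
      by rewrite (diam_Fw F1D); apply: pair_in_Fw => //; apply: (subsetP s1).
    by rewrite (diam_Fw F2D); apply: pair_in_Fw => //; apply: (subsetP s2).
  - apply: subset_leq_card; apply/subsetP => D; rewrite inE => /exists_inP [F _ /andP [] //].
rewrite cardsDS // => h.
have : #|H| <= tcount e by apply: subset_leq_card.
rewrite /tcount in h *; lia.
Qed.

Definition goodS (S : {set T}) (rk : T -> nat) (v : T) : Prop :=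
  (exists u, [/\ u \in S, eminus e u v & rk u < rk v]) \/
  (exists D, [/\ D \in triangles e, v \in D &
              forall y, y \in D -> y != v -> y \in S /\ rk y < rk v]).

Record Inv (r : T) (S : {set T}) (rk : T -> nat) (Z3 : {set T}) (ch : T -> {set T}) : Prop :=
  { inv_r : r \in S;
    inv_Z3 : Z3 \subset S;
    inv_rZ : r \notin Z3;
    inv_rk : forall x, x \in S -> rk x < #|S|;
    inv_good : forall v, v \in S -> v != r -> v \notin Z3 -> goodS S rk v;
    inv_ch : forall v, v \in Z3 -> ch v \in triangles e /\ 1 < #|ch v :&: S|;
    inv_disj : forall v w, v \in Z3 -> w \in Z3 -> v != w -> #|ch v :&: ch w| <= 1;
    inv_conn : Z3 != set0 -> ~ (forall x y, connect (eminus e) x y) }.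

Lemma complete (S D : {set T}) : D \in triangles e -> 1 < #|D :&: S| -> ~~ (D \subset S) ->
  exists v, [/\ v \notin S, v \in D & forall y, y \in D -> y != v -> y \in S].
Proof.
move=> Dt c2 /subsetPn [v vD vS]; exists v; split => // y yD yv.
have D3 : #|D| = 3 by move: Dt; rewrite inE => /andP [/eqP].
have E : D :&: S = D :\ v.
  apply: subcardeq.
    apply/subsetP => z; rewrite !inE => /andP [zD zS]; rewrite zD andbT.
    by apply: contraNneq vS => <-.
  by move: (cardsD1 v D); rewrite vD D3 add1n => -[<-].
have : y \in D :\ v by rewrite !inE yv yD.
by rewrite -E inE => /andP [].
Qed.

Lemma cross (R : rel T) (S : {set T}) x y : connect R x y -> x \in S -> y \notin S ->
  exists u v, [/\ u \in S, v \notin S & R u v].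
Proof.
case/connectP => p; elim: p x => [|a p IH] x /=; first by move=> _ -> ->.
case/andP => Rxa pth yE xS yS.
case: (boolP (a \in S)) => aS; first exact: (IH a pth yE aS yS).
by exists x, a.
Qed.

Lemma goodS_mono (S S' : {set T}) rk rk' v : S \subset S' -> (forall x, x \in S -> rk' x = rk x) ->
  v \in S -> goodS S rk v -> goodS S' rk' v.
Proof.
move=> sSS' rkE vS [[u [uS uv ruv]] | [D [Dt vD HD]]].
  by left; exists u; rewrite (subsetP sSS') // !rkE.
right; exists D; split => // y yD yv; case: (HD y yD yv) => yS ryv.
by rewrite (subsetP sSS') // !rkE.
Qed.

Lemma step (r : T) (S : {set T}) rk Z3 ch (v : T) Z3' ch' :
  Inv r S rk Z3 ch -> v \notin S ->
  let S' := v |: S in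
  let rk' := fun x => if x == v then #|S| else rk x in
  (Z3' = Z3 /\ goodS S' rk' v) \/
  (Z3' = v |: Z3 /\ [/\ ch' v \in triangles e, 1 < #|ch' v :&: S'|,
                      (forall w, w \in Z3 -> #|ch' v :&: ch w| <= 1) &
                      ~ (forall x y, connect (eminus e) x y)]) ->
  (forall w, w \in Z3 -> ch' w = ch w) ->
  Inv r S' rk' Z3' ch'.
Proof.
move=> [Ir IZ IrZ Irk Igood Ich Idisj Iconn] vS S' rk' H chE.
have sS : S \subset S' by apply/subsetP => x xS; rewrite in_setU1 xS orbT.
have rkE : forall x, x \in S -> rk' x = rk x.
  by move=> x xS; rewrite /rk'; case: eqP => // xv; move: vS; rewrite -xv xS.
have cS' : #|S'| = #|S|.+1 by rewrite cardsU1 vS.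
have vZ3 : v \notin Z3 by apply: contra vS; apply: (subsetP IZ).
have chS w : w \in Z3 -> ch' w \in triangles e /\ 1 < #|ch' w :&: S'|.
  move=> wZ; rewrite chE //; case: (Ich w wZ) => wt wc; split => //.
  by apply: leq_trans wc _; apply: subset_leq_card; apply: setIS.
case: H => [[Z3E gv] | [Z3E [vt vc vd nc]]]; subst Z3'; split.
- by rewrite in_setU1 Ir orbT.
- by apply: subset_trans IZ sS.
- by [].
- move=> x; rewrite in_setU1 cS' => /orP [/eqP -> | xS]; first by rewrite /rk' eqxx.
  by rewrite rkE // ltnS ltnW // Irk.
- move=> u; rewrite in_setU1 => /orP [/eqP -> // | uS] ur uZ.
  by apply: (goodS_mono sS rkE uS); apply: Igood.
- exact: chS.
- move=> u w uZ wZ uw; rewrite !chE //; exact: Idisj.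
- exact: Iconn.
- by rewrite in_setU1 Ir orbT.
- by apply: setUSS => //; rewrite sub1set in_setU1 eqxx.
- by rewrite in_setU1 negb_or IrZ andbT; apply: contraNneq vS => <-.
- move=> x; rewrite in_setU1 cS' => /orP [/eqP -> | xS]; first by rewrite /rk' eqxx.
  by rewrite rkE // ltnS ltnW // Irk.
- move=> u; rewrite !in_setU1 negb_or => /orP [/eqP -> | uS] ur /andP [uv uZ].
    by rewrite eqxx in uv.
  by apply: (goodS_mono sS rkE uS); apply: Igood.
- move=> u; rewrite in_setU1 => /orP [/eqP -> // | uZ]; exact: chS.
- move=> u w; rewrite !in_setU1 => /orP [/eqP -> | uZ] /orP [/eqP -> | wZ]; rewrite ?eqxx //.
  + by move=> _; rewrite (chE _ wZ); apply: vd.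
  + by move=> _; rewrite (chE _ uZ) setIC; apply: vd.
  + move=> uw; rewrite !chE //; exact: Idisj.
- by move=> _.
Qed.

Lemma setCU1 (v : T) (S : {set T}) : ~: (v |: S) = ~: S :\ v.
Proof. by apply/setP => x; rewrite !inE negb_or. Qed.

Lemma greedy_ind (Gc : forall x y, connect e x y) (r : T) :
  forall n S rk Z3 ch, #|~: S| = n -> Inv r S rk Z3 ch ->
  exists rk' Z3' ch', Inv r setT rk' Z3' ch'.
Proof.
elim=> [|n IH] S rk Z3 ch cn I.
  have E : ~: S = set0 by apply/eqP; rewrite -cards_eq0 cn.
  have SE : S = setT by rewrite -[S]setCK E setC0.
  by exists rk, Z3, ch; rewrite -SE.
have [w0 w0S] : exists w0, w0 \notin S.
  have : 0 < #|~: S| by rewrite cn.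
  by case/card_gt0P => w0; rewrite inE => h; exists w0.
have cnv v : v \notin S -> #|~: (v |: S)| = n.
  move=> vS; move: (cardsD1 v (~: S)); rewrite cn inE vS add1n setCU1.
  by case.
case: I => Ir IZ IrZ Irk Igood Ich Idisj Iconn.
have I : Inv r S rk Z3 ch by split.
have vneq v x : v \notin S -> x \in S -> x != v.
  by move=> vS xS; apply: contraNneq vS => <-.
case: (boolP [exists v, (v \notin S) && [exists u in S, eminus e u v]]) => [c1 | nc1].
  case/existsP: c1 => v /andP [vS /exists_inP [u uS uv]].
  apply: (IH (v |: S) _ Z3 ch (cnv v vS)).
  apply: (step I vS) => //; left; split => //; left; exists u.
  by rewrite in_setU1 uS orbT eqxx (negbTE (vneq v u vS uS)) Irk.
case: (boolP [exists v, (v \notin S) && [exists D in triangles e, (v \in D) && [forall y in D, (y != v) ==> (y \in S)]]]) => [c2 | nc2].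
  case/existsP: c2 => v /andP [vS /exists_inP [D Dt /andP [vD /forall_inP HD]]].
  apply: (IH (v |: S) _ Z3 ch (cnv v vS)).
  apply: (step I vS) => //; left; split => //; right; exists D; split => // y yD yv.
  have yS : y \in S by move: (HD y yD); rewrite yv.
  by rewrite in_setU1 yS orbT eqxx (negbTE (vneq v y vS yS)) Irk.
have [u [v [uS vS uv]]] := cross (Gc r w0) Ir w0S.
have : triangle_edge e u v.
  apply: contraNT nc1 => nt; apply/existsP; exists v; rewrite vS /=.
  by apply/exists_inP; exists u => //; rewrite /eminus uv nt.
rewrite /triangle_edge uv /= => /existsP [w /andP [uw vw]].
pose D := [set u; v; w].
have Dt : D \in triangles e by rewrite triE uv vw uw.
have nc2' : forall D', D' \in triangles e -> 1 < #|D' :&: S| -> D' \subset S.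
  move=> D' D't c; apply: contraNT nc2 => nsub.
  case: (complete D't c nsub) => v' [v'S v'D H]; apply/existsP; exists v'; rewrite v'S /=.
  apply/exists_inP; exists D' => //; rewrite v'D /=; apply/forall_inP => y yD; apply/implyP; exact: H.
pose ch' := fun x => if x == v then D else ch x.
apply: (IH (v |: S) _ (v |: Z3) ch' (cnv v vS)).
apply: (step I vS); last first.
  by move=> x xZ; rewrite /ch' (negbTE (vneq v x vS (subsetP IZ x xZ))).
right; split => //; rewrite /ch' eqxx; split => //.
- have sI : [set u; v] \subset D :&: (v |: S).
    by apply/subsetP => y /set2P [] ->; rewrite !inE eqxx ?orbT //= uS orbT.
  by move: (subset_leq_card sI); rewrite cards2 (edge_neq uv).
- move=> x xZ; rewrite leqNgt; apply/negP => c.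
  case: (Ich x xZ) => xt xc.
  have sx := nc2' _ xt xc.
  have DS : D \subset S.
    apply: (nc2' _ Dt).
    apply: leq_trans c _; apply: subset_leq_card; apply: setIS; exact: sx.
  by move: vS; rewrite (subsetP DS) // !inE eqxx orbT.
- move=> emc; have [u' [v' [u'S v'S em]]] := cross (emc r w0) Ir w0S.
  move/existsP: nc1; apply; exists v'; rewrite v'S /=; apply/exists_inP; by exists u'.
Qed.

Lemma greedy (Gc : forall x y, connect e x y) (r : T) :
  exists (rk : T -> nat) (Z : {set T}), [/\ (forall v, v \notin Z ->
     (exists u, eminus e u v /\ rk u < rk v) \/
     (exists D, [/\ D \in triangles e, v \in D & forall y, y \in D -> y != v -> rk y < rk v])),
     #|Z| + dcount e <= 1 + tcount e &
     ((forall x y, connect (eminus e) x y) -> #|Z| <= 1)].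
Proof.
have I0 : Inv r [set r] (fun _ => 0) set0 (fun _ => set0).
  split => //.
  - by rewrite set11.
  - by rewrite sub0set.
  - by rewrite inE.
  - by move=> x _; rewrite cards1.
  - by move=> v /set1P ->; rewrite eqxx.
  - by move=> v; rewrite inE.
  - by move=> v w; rewrite inE.
  - by rewrite eqxx.
have [rk [Z3 [ch [_ _ IrZ _ Igood Ich Idisj Iconn]]]] := greedy_ind Gc (erefl _) I0.
exists rk, (r |: Z3); split.
- move=> v; rewrite in_setU1 negb_or => /andP [vr vZ].
  case: (Igood v (in_setT v) vr vZ) => [[u [_ uv ruv]] | [D [Dt vD HD]]].
    by left; exists u.
  by right; exists D; split => // y yD yv; case: (HD y yD yv).
- have chinj : {in Z3 &, injective ch}.
    move=> v w vZ wZ E; apply/eqP; apply/negPn/negP => vw.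
    have := Idisj v w vZ wZ vw; rewrite E setIid.
    by case: (Ich w wZ) => wt _; move: wt; rewrite inE => /andP [/eqP -> _].
  have := charge (H := ch @: Z3).
  rewrite card_in_imset //.
  move=> h; have {}h := h _ _.
  have hh : #|Z3| + dcount e <= tcount e.
    apply: h.
      by apply/subsetP => D /imsetP [v vZ ->]; case: (Ich v vZ).
    move=> D1 D2 /imsetP [v vZ ->] /imsetP [w wZ ->] ne; apply: Idisj => //.
    by apply: contraNneq ne => ->.
  rewrite cardsU1 IrZ add1n; by [].
- move=> emc; have Z0 : Z3 = set0.
    by apply/eqP; apply: contraT => nz; case: (Iconn nz emc).
  by rewrite Z0 setU0 cards1.
Qed.

Lemma ncomp1 : ncomp (eminus e) = 1 -> forall x y, connect (eminus e) x y.
Proof.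
move=> /eqP /cards1P [C0 CE] x y.
have cx : [set z | connect (eminus e) x z] \in comps by apply/imsetP; exists x.
have cy : [set z | connect (eminus e) y z] \in comps by apply/imsetP; exists y.
rewrite /comps CE !inE in cx cy.
have : y \in [set z | connect (eminus e) y z] by rewrite inE connect0.
by rewrite (eqP cy) -(eqP cx) inE.
Qed.

Lemma main_facts (Gc : forall x y, connect e x y) (Tn : 0 < #|T|) :
  let p := phylogeny_number e in
  [/\ #|NT| + 3 * tcount e = #|edge_set e| + dcount e,
      #|NT| + tcount e + 1 <= #|T| + p,
      #|NT| + ncomp (eminus e) <= #|T| + p &
      exists z, [/\ p + #|T| <= #|NT| + tcount e + z, z + dcount e <= 1 + tcount e &
                    (ncomp (eminus e) = 1 -> z <= 1)]].
Proof.
move=> p.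
case/card_gt0P: (Tn) => r _.
have [rk [Z [HZ cZ cZ1]]] := greedy Gc r.
have [k [Hk bk]] := UB HZ.
have [Hp pmin] := phylo_spec (ex_intro _ k Hk).
case: Hp => D PD.
have [lb1 lb2] := LB PD Tn.
split => //; first by rewrite count_NT.
exists #|Z|; split => //.
  by apply: leq_trans bk; rewrite leq_add2r; apply: pmin.
by move=> h; apply: cZ1; apply: ncomp1.
Qed.

End Basic.

Unset Implicit Arguments.
Set Strict Implicit.
Import Order.TTheory GRing.Theory Num.Theory.
Local Open Scope ring_scope.

Theorem mainTheorem9 (T : finType) (e : rel T)
    (e_sym : symmetric e) (e_irr : irreflexive e)
    (T_nonempty : (0 < #|T|)%N)
    (G_conn : forall x y : T, connect e x y)
    (G_K4free : K4_free e)
    (G_diam : diamonds_edge_disjoint e) :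
  let E := (#|edge_set e|%:Z) in
  let V := (#|T|%:Z) in
  let t := (tcount e)%:Z in
  let d := (dcount e)%:Z in
  let p := (phylogeny_number e)%:Z in
  [/\ E - V - 2 * t + d + 1 <= p,
      p <= E - V - t + 1,
      ((ncomp (eminus e) = 1)%N -> p = E - V - 2 * t + d + 1) &
      ((ncomp (eminus e))%:Z = 2 * t - d + 1 -> p = E - V - t + 1)].
Proof.
move=> E V t d p.
have [F1 F2 F3 [z [F4 F5 F6]]] := main_facts e_sym e_irr G_K4free G_diam G_conn T_nonempty.
rewrite /E /V /t /d /p; split.
- lia.
- lia.
- move=> h; have := F6 h; lia.
- move=> h; lia.
Qed.
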